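(* Let $M$ be a free $\mathbb{T}$-module with a finite $\mathbb{T}$-basis, $V$ its associated complex vector space, and $(\cdot,\cdot)$ a bicomplex scalar product on $M$ which is hyperbolic positive and closed on $V$. Then $\{M,(\cdot,\cdot)\}$ is a $\mathbb{T}$-Hilbert space if and only if $V$ with the restriction of $(\cdot,\cdot)$ is a (complex) Hilbert space.
   Context: Bicomplex numbers: $\mathbb{T}=\{z_1+z_2\mathbf{i_2}: z_1,z_2\in\mathbb{C}(\mathbf{i_1})\}$, $\mathbb{C}(\mathbf{i_1})=\{x+y\mathbf{i_1}: x,y\in\mathbb{R}\}$, $\mathbf{i_1}^2=\mathbf{i_2}^2=-1$, $\mathbf{i_1}\mathbf{i_2}=\mathbf{i_2}\mathbf{i_1}=\mathbf{j}$, $\mathbf{j}^2=1$ (commutative). Hyperbolic numbers $\mathbb{D}=\{x+y\mathbf{j}:x,y\in\mathbb{R}\}$. Idempotents $\mathbf{e_1}=(1+\mathbf{j})/2$, $\mathbf{e_2}=(1-\mathbf{j})/2$. Conjugation: $(z_1+z_2\mathbf{i_2})^{\dagger_3}=\overline{z_1}-\overline{z_2}\mathbf{i_2}$. $\mathbb{D}^+=\{a\mathbf{e_1}+b\mathbf{e_2}: a,b\ge 0\}$. $M$ has $\mathbb{T}$-basis $\{\widehat m_1,\dots,\widehat m_n\}$, $V=\{\sum x_l\widehat m_l: x_l\in\mathbb{C}(\mathbf{i_1})\}$; for $\widehat X=\sum x_l\widehat m_l$ with $x_l=x_{1l}\mathbf{e_1}+x_{2l}\mathbf{e_2}$, $x_{kl}\in\mathbb{C}(\mathbf{i_1})$,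 put $\widehat X_{\mathbf{e_k}}=\sum_l x_{kl}\widehat m_l\in V$. A bicomplex scalar product is a map $(\cdot,\cdot):M\times M\to\mathbb{T}$ with: $(\widehat X,\widehat Y_1+\widehat Y_2)=(\widehat X,\widehat Y_1)+(\widehat X,\widehat Y_2)$; $(\widehat X,\alpha\widehat Y)=\alpha(\widehat X,\widehat Y)$ for $\alpha\in\mathbb{T}$; $(\widehat X,\widehat Y)=(\widehat Y,\widehat X)^{\dagger_3}$; $(\widehat X,\widehat X)=0\iff\widehat X=0$. Hyperbolic positive: $(\widehat X,\widehat X)\in\mathbb{D}^+$ for all $\widehat X$. Closed on $V$: $(\widehat X,\widehat Y)\in\mathbb{C}(\mathbf{i_1})$ for $\widehat X,\widehat Y\in V$. For $\widehat Z\in V$, $\|\widehat Z\|=(\widehat Z,\widehat Z)^{1/2}$; for $\widehat X\in M$, $\|\widehat X\|:=\big((\|\widehat X_{\mathbf{e_1}}\|^2+\|\widehat X_{\mathbf{e_2}}\|^2)/2\big)^{1/2}$, and $d(\widehat X,\widehat Y)=\|\widehat X-\widehat Y\|$. $\{M,(\cdot,\cdot)\}$ is called a $\mathbb{T}$-Hilbert space if $M$ is complete with respect to $d$. *)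

(* Defs.v *)
From HB Require Import structures.
From mathcomp Require Import all_boot all_order all_algebra.
From mathcomp Require Import complex.
From mathcomp Require Import reals.
Set Implicit Arguments. Unset Strict Implicit. Unset Printing Implicit Defensive.
Import Order.TTheory GRing.Theory Num.Theory.
Local Open Scope ring_scope.

Section Bicomplex.
Variable R : realType.

Notation Ci := (complex R).
Definition ii1 : Ci := Complex 0 1.
Definition cconj (z : Ci) : Ci := conjc z.

(* A bicomplex number z1 + z2 i2 with z1, z2 in C(i1). *)
Record bicomplex := BC { bc1 : Ci; bc2 : Ci }.

Definition bc0 : bicomplex := BC 0 0.
Definition bc_add (x y : bicomplex) : bicomplex :=
  BC (bc1 x + bc1 y) (bc2 x + bc2 y).
Definition bc_mul (x y : bicomplex) : bicomplex :=
  BC (bc1 x * bc1 y - bc2 x * bc2 y) (bc1 x * bc2 y + bc2 x * bc1 y).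
Definition bc_dag3 (x : bicomplex) : bicomplex :=
  BC (cconj (bc1 x)) (- cconj (bc2 x)).

(* Idempotent components: z1 + z2 i2 = (z1 - i1 z2) e1 + (z1 + i1 z2) e2. *)
Definition bc_e1 (x : bicomplex) : Ci := bc1 x - ii1 * bc2 x.
Definition bc_e2 (x : bicomplex) : Ci := bc1 x + ii1 * bc2 x.

Definition in_Dplus (x : bicomplex) : Prop :=
  exists a b : R, 0 <= a /\ 0 <= b /\ bc_e1 x = (a%:C)%C /\ bc_e2 x = (b%:C)%C.

Definition in_Ci (x : bicomplex) : Prop := bc2 x = 0.

(* The free T-module M with T-basis m_1..m_n, realised by coordinates:
   X = sum_l x_l m_l  <->  (x_l)_l : 'I_n -> T. *)
Definition Mod (n : nat) := 'I_n -> bicomplex.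
Definition M_add n (X Y : Mod n) : Mod n := fun l => bc_add (X l) (Y l).
Definition M_opp n (X : Mod n) : Mod n := fun l => BC (- bc1 (X l)) (- bc2 (X l)).
Definition M_scale n (a : bicomplex) (X : Mod n) : Mod n := fun l => bc_mul a (X l).
Definition M_zero n : Mod n := fun _ => bc0.

(* V = { sum_l x_l m_l : x_l in C(i1) }, realised by coordinates 'I_n -> C(i1). *)
Definition Vsp (n : nat) := 'I_n -> Ci.
Definition V_add n (u v : Vsp n) : Vsp n := fun l => u l + v l.
Definition V_opp n (u : Vsp n) : Vsp n := fun l => - u l.
Definition V_scale n (a : Ci) (u : Vsp n) : Vsp n := fun l => a * u l.
Definition V_zero n : Vsp n := fun _ => 0.
Definition V_to_M n (u : Vsp n) : Mod n := fun l => BC (u l) 0.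

Definition M_e1 n (X : Mod n) : Vsp n := fun l => bc_e1 (X l).
Definition M_e2 n (X : Mod n) : Vsp n := fun l => bc_e2 (X l).

Definition bicomplex_scalar_product n (ip : Mod n -> Mod n -> bicomplex) : Prop :=
  [/\ (forall X Y1 Y2, ip X (M_add Y1 Y2) = bc_add (ip X Y1) (ip X Y2)),
      (forall X Y (a : bicomplex), ip X (M_scale a Y) = bc_mul a (ip X Y)),
      (forall X Y, ip X Y = bc_dag3 (ip Y X)) &
      (forall X, ip X X = bc0 <-> X = @M_zero n)].

Definition hyperbolic_positive n (ip : Mod n -> Mod n -> bicomplex) : Prop :=
  forall X, in_Dplus (ip X X).

Definition closed_on_V n (ip : Mod n -> Mod n -> bicomplex) : Prop :=
  forall u v : Vsp n, in_Ci (ip (V_to_M u) (V_to_M v)).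

(* Restriction of (.,.) to V, as a C(i1)-valued map (meaningful under closed_on_V). *)
Definition ip_V n (ip : Mod n -> Mod n -> bicomplex) (u v : Vsp n) : Ci :=
  bc1 (ip (V_to_M u) (V_to_M v)).

(* ||Z|| = (Z,Z)^{1/2} for Z in V ((Z,Z) is a nonnegative real under the
   standing hypotheses; we take the square root of its real part). *)
Definition normV n (ip : Mod n -> Mod n -> bicomplex) (u : Vsp n) : R :=
  Num.sqrt (complex.Re (ip_V ip u u)).

Definition normM n (ip : Mod n -> Mod n -> bicomplex) (X : Mod n) : R :=
  Num.sqrt ((normV ip (M_e1 X) ^+ 2 + normV ip (M_e2 X) ^+ 2) / 2%:R).

Definition distM n ip (X Y : Mod n) : R := normM ip (M_add X (M_opp Y)).
Definition distV n ip (u v : Vsp n) : R := normV ip (V_add u (V_opp v)).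

Definition cauchy_seq (A : Type) (d : A -> A -> R) (s : nat -> A) : Prop :=
  forall eps : R, 0 < eps -> exists N : nat,
    forall p q : nat, (N <= p)%N -> (N <= q)%N -> d (s p) (s q) < eps.
Definition converges_to (A : Type) (d : A -> A -> R) (s : nat -> A) (x : A) : Prop :=
  forall eps : R, 0 < eps -> exists N : nat,
    forall p : nat, (N <= p)%N -> d (s p) x < eps.
Definition complete_wrt (A : Type) (d : A -> A -> R) : Prop :=
  forall s : nat -> A, cauchy_seq d s -> exists x, converges_to d s x.

Definition T_Hilbert n (ip : Mod n -> Mod n -> bicomplex) : Prop :=
  complete_wrt (distM ip).

(* A complex inner product on V (linear in the second argument, as in the
   paper's convention). *)
Definition complex_inner_product n (ipc : Vsp n -> Vsp n -> Ci) : Prop :=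
  [/\ (forall u v1 v2, ipc u (V_add v1 v2) = ipc u v1 + ipc u v2),
      (forall u v (a : Ci), ipc u (V_scale a v) = a * ipc u v),
      (forall u v, ipc u v = cconj (ipc v u)),
      (forall u, 0 <= ipc u u) &
      (forall u, ipc u u = 0 <-> u = @V_zero n)].

Definition complex_norm n (ipc : Vsp n -> Vsp n -> Ci) (u : Vsp n) : R :=
  Num.sqrt (complex.Re (ipc u u)).

Definition complex_Hilbert n (ipc : Vsp n -> Vsp n -> Ci) : Prop :=
  complex_inner_product ipc /\
  complete_wrt (fun u v => complex_norm ipc (V_add u (V_opp v))).

End Bicomplex.

(* Main.v *)
Require Import Defs.
From mathcomp Require Import all_boot all_order all_algebra.
From mathcomp Require Import complex reals.
From mathcomp Require Import ring lra.
From Stdlib Require Import FunctionalExtensionality.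
Set Implicit Arguments.
Import Order.TTheory GRing.Theory Num.Theory.
Local Open Scope ring_scope.

Lemma keyL1 (R : realType) (a b m e : R) : 0 <= a -> 0 <= b -> 0 <= m ->
  m^+2 = (a^+2+b^+2)/2 -> m < e/2 -> a < e.
Proof. move=> *; nra. Qed.
Lemma keyL1' (R : realType) (a b m e : R) : 0 <= a -> 0 <= b -> 0 <= m ->
  m^+2 = (a^+2+b^+2)/2 -> m < e/2 -> b < e.
Proof. move=> *; nra. Qed.
Lemma keyL2 (R : realType) (a b m e : R) : 0 <= a -> 0 <= b -> 0 <= m ->
  m^+2 = (a^+2+b^+2)/2 -> a < e -> b < e -> m < e.
Proof. move=> *; nra. Qed.

Lemma normV_ge0 (R : realType) n (ip : Mod R n -> Mod R n -> bicomplex R) u :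
  0 <= normV ip u.
Proof. exact: sqrtr_ge0. Qed.

Lemma distM_facts (R : realType) n (ip : Mod R n -> Mod R n -> bicomplex R) X Y :
  0 <= distM ip X Y /\
  distM ip X Y ^+ 2 = (distV ip (M_e1 X) (M_e1 Y) ^+ 2
                        + distV ip (M_e2 X) (M_e2 Y) ^+ 2) / 2.
Proof.
have e1 : M_e1 (M_add X (M_opp Y)) = V_add (M_e1 X) (V_opp (M_e1 Y)).
  apply: functional_extensionality => l.
  rewrite /M_e1 /V_add /V_opp /M_add /M_opp /bc_e1 /bc_add /=; ring.
have e2 : M_e2 (M_add X (M_opp Y)) = V_add (M_e2 X) (V_opp (M_e2 Y)).
  apply: functional_extensionality => l.
  rewrite /M_e2 /V_add /V_opp /M_add /M_opp /bc_e2 /bc_add /=; ring.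
rewrite /distM /normM e1 e2 -!/(distV _ _ _).
split; first exact: sqrtr_ge0.
apply: sqr_sqrtr.
apply: divr_ge0; last by [].
by apply: addr_ge0; apply: sqr_ge0.
Qed.

Lemma ii1sq (R : realType) : ii1 R * ii1 R = -1.
Proof.
apply/eqP; rewrite /ii1 eq_complex /=; apply/andP; split; apply/eqP; ring.
Qed.

Theorem mainTheorem15 (R : realType) (n : nat)
    (ip : Mod R n -> Mod R n -> bicomplex R) :
  bicomplex_scalar_product ip ->
  hyperbolic_positive ip ->
  closed_on_V ip ->
  (T_Hilbert ip <-> complex_Hilbert (ip_V ip)).
Proof.
move=> [Hadd Hscal Hsym Hdef] Hpos Hcl.
have Ve1 : forall u : Vsp R n, M_e1 (V_to_M u) = u.
  move=> u; apply: functional_extensionality => l.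
  by rewrite /M_e1 /V_to_M /bc_e1 /= mulr0 subr0.
have Ve2 : forall u : Vsp R n, M_e2 (V_to_M u) = u.
  move=> u; apply: functional_extensionality => l.
  by rewrite /M_e2 /V_to_M /bc_e2 /= mulr0 addr0.
split.
- move=> HM; split.
  + split.
    * move=> u v1 v2; rewrite /ip_V.
      have -> : V_to_M (V_add v1 v2) = M_add (V_to_M v1) (V_to_M v2).
        apply: functional_extensionality => l.
        by rewrite /V_to_M /M_add /V_add /bc_add /= addr0.
      by rewrite Hadd.
    * move=> u v a; rewrite /ip_V.
      have -> : V_to_M (V_scale a v) = M_scale (BC a 0) (V_to_M v).
        apply: functional_extensionality => l.
        rewrite /V_to_M /M_scale /V_scale /bc_mul /=; congr BC; ring.
      rewrite Hscal /bc_mul /=.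
      by rewrite mul0r subr0.
    * move=> u v; rewrite /ip_V Hsym.
      by [].
    * move=> u; rewrite /ip_V.
      have [a [b [ha [hb [h1 h2]]]]] := Hpos (V_to_M u).
      move: h1; rewrite /bc_e1 (Hcl u u) mulr0 subr0 => ->.
      by rewrite ler0c.
    * move=> u; rewrite /ip_V; split.
      - move=> h0.
        have hz : ip (V_to_M u) (V_to_M u) = bc0 R.
          move: h0 (Hcl u u); rewrite /in_Ci /bc0.
          by case: (ip (V_to_M u) (V_to_M u)) => z1 z2 /= -> ->.
        move/Hdef: hz => hz.
        apply: functional_extensionality => l.
        by have := congr1 (fun X => bc1 (X l)) hz.
      - move=> ->.
        have -> : V_to_M (@V_zero R n) = @M_zero R n by [].
        by have -> := proj2 (Hdef (@M_zero R n)) erefl.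
  + move=> s Hs.
    have HS : cauchy_seq (distM ip) (fun p => V_to_M (s p)).
      move=> e he; have [N HN] := Hs e he; exists N => p q hp hq.
      have [d0 d2] := distM_facts ip (V_to_M (s p)) (V_to_M (s q)).
      rewrite !Ve1 !Ve2 in d2.
      have h := HN p q hp hq.
      apply: (@keyL2 R (distV ip (s p) (s q)) (distV ip (s p) (s q)) _ e _ _ d0 d2 h h); exact: normV_ge0.
    have [X HX] := HM _ HS.
    exists (M_e1 X) => e he.
    have he2 : 0 < e / 2 by apply: divr_gt0.
    have [N HN] := HX _ he2; exists N => p hp.
    have [d0 d2] := distM_facts ip (V_to_M (s p)) X.
    rewrite !Ve1 !Ve2 in d2.
    apply: (@keyL1 R (distV ip (s p) (M_e1 X)) (distV ip (s p) (M_e2 X)) _ e _ _ d0 d2 (HN p hp)); exact: normV_ge0.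
- move=> [_ HV] S HS.
  have H1 : cauchy_seq (fun u v => complex_norm (ip_V ip) (V_add u (V_opp v)))
              (fun p => M_e1 (S p)).
    move=> e he.
    have he2 : 0 < e / 2 by apply: divr_gt0.
    have [N HN] := HS _ he2; exists N => p q hp hq.
    have [d0 d2] := distM_facts ip (S p) (S q).
    apply: (@keyL1 R (distV ip (M_e1 (S p)) (M_e1 (S q))) (distV ip (M_e2 (S p)) (M_e2 (S q))) _ e _ _ d0 d2 (HN p q hp hq)); exact: normV_ge0.
  have H2 : cauchy_seq (fun u v => complex_norm (ip_V ip) (V_add u (V_opp v)))
              (fun p => M_e2 (S p)).
    move=> e he.
    have he2 : 0 < e / 2 by apply: divr_gt0.
    have [N HN] := HS _ he2; exists N => p q hp hq.
    have [d0 d2] := distM_facts ip (S p) (S q).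
    apply: (@keyL1' R (distV ip (M_e1 (S p)) (M_e1 (S q))) (distV ip (M_e2 (S p)) (M_e2 (S q))) _ e _ _ d0 d2 (HN p q hp hq)); exact: normV_ge0.
  have [x1 Hx1] := HV _ H1.
  have [x2 Hx2] := HV _ H2.
  pose X : Mod R n := fun l => BC ((x1 l + x2 l) / 2) (ii1 R * (x1 l - x2 l) / 2).
  have X1 : M_e1 X = x1.
    apply: functional_extensionality => l.
    rewrite /M_e1 /X /bc_e1 /=.
    have -> : ii1 R * (ii1 R * (x1 l - x2 l) / 2)
            = (ii1 R * ii1 R) * (x1 l - x2 l) / 2 by rewrite !mulrA.
    by rewrite ii1sq; field.
  have X2 : M_e2 X = x2.
    apply: functional_extensionality => l.
    rewrite /M_e2 /X /bc_e2 /=.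
    have -> : ii1 R * (ii1 R * (x1 l - x2 l) / 2)
            = (ii1 R * ii1 R) * (x1 l - x2 l) / 2 by rewrite !mulrA.
    by rewrite ii1sq; field.
  exists X => e he.
  have [N1 HN1] := Hx1 _ he.
  have [N2 HN2] := Hx2 _ he.
  exists (maxn N1 N2) => p hp.
  have [d0 d2] := distM_facts ip (S p) X.
  rewrite X1 X2 in d2.
  apply: (@keyL2 R (distV ip (M_e1 (S p)) x1) (distV ip (M_e2 (S p)) x2) _ e _ _ d0 d2).
  + exact: normV_ge0.
  + exact: normV_ge0.
  + apply: HN1; exact: leq_trans (leq_maxl _ _) hp.
  + apply: HN2; exact: leq_trans (leq_maxr _ _) hp.
Qed.
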